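(* Suppose that $(L_1,<_1),\ldots,(L_n,<_n)$ are linear orders each with at least two elements, and let $<$ be the product order on $L_1\times\cdots\times L_n$. If $\prec_1,\ldots,\prec_n$ are linear orders on $L_1\times\cdots\times L_n$ which realize $<$ (i.e. $<\;=\;\prec_1\cap\cdots\cap\prec_n$), then there is a permutation $\sigma\in S_n$ such that for all $i\leq n$ and all $\mathbf{a},\mathbf{b}\in L_1\times\cdots\times L_n$, $a_i<_ib_i$ implies $\mathbf{a}\prec_{\sigma(i)}\mathbf{b}$.
   Context: The product order: $\mathbf{a}<\mathbf{b}$ iff $a_i\leq_i b_i$ for all $i$ and $\mathbf{a}\neq\mathbf{b}$. $S_n$ is the group of permutations of $\{1,\ldots,n\}$. *)

(* Defs.v *)
From mathcomp Require Import all_boot all_fingroup.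
Set Implicit Arguments. Unset Strict Implicit. Unset Printing Implicit Defensive.

Definition strict_linear_order (T : Type) (lt : T -> T -> Prop) : Prop :=
  (forall x, ~ lt x x) /\
  (forall x y z, lt x y -> lt y z -> lt x z) /\
  (forall x y, x <> y -> lt x y \/ lt y x).

Definition prodT (n : nat) (L : 'I_n -> Type) : Type := forall i : 'I_n, L i.

Definition prod_lt (n : nat) (L : 'I_n -> Type)
  (lt : forall i : 'I_n, L i -> L i -> Prop) (a b : prodT L) : Prop :=
  (forall i : 'I_n, lt i (a i) (b i) \/ a i = b i) /\ a <> b.

(* Main.v *)
From Stdlib Require Import Classical IndefiniteDescription.
Require Import Defs.
From mathcomp Require Import all_boot all_fingroup.

Section Aux.
Variables (n : nat) (L : 'I_n -> Type) (lt : forall i : 'I_n, L i -> L i -> Prop).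
Hypothesis hlin : forall i : 'I_n, strict_linear_order (lt i).
Variable prec : 'I_n -> prodT L -> prodT L -> Prop.
Hypothesis hprec : forall k : 'I_n, strict_linear_order (prec k).
Hypothesis hreal : forall a b : prodT L, prod_lt lt a b <-> (forall k : 'I_n, prec k a b).

Definition wle {i} (a b : L i) := lt i a b \/ a = b.
Definition ple (a b : prodT L) := forall m, wle (a m) (b m).

Lemma lt_irr {i} {a : L i} : ~ lt i a a.
Proof. by case: (hlin i) => h _; apply: h. Qed.
Lemma lt_trans {i} {a b c : L i} : lt i a b -> lt i b c -> lt i a c.
Proof. by case: (hlin i) => _ [h _]; apply: h. Qed.
Lemma lt_wle {i} {a b c : L i} : lt i a b -> wle b c -> lt i a c.
Proof. by move=> h [h'|<-] //; apply: lt_trans h h'. Qed.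
Lemma wle_lt {i} {a b c : L i} : wle a b -> lt i b c -> lt i a c.
Proof. by move=> [h'|->] h //; apply: lt_trans h' h. Qed.

Lemma ple_prec k {a b} : ple a b -> a = b \/ prec k a b.
Proof.
move=> h; case: (classic (a = b)) => [->|ne]; [by left|right].
by apply: (proj1 (hreal a b)); split.
Qed.
Lemma prec_irr {k a} : ~ prec k a a.
Proof. by case: (hprec k) => h _; apply: h. Qed.
Lemma prec_trans {k a b c} : prec k a b -> prec k b c -> prec k a c.
Proof. by case: (hprec k) => _ [h _]; apply: h. Qed.
Lemma prec_le_r {k a b c} : prec k a b -> ple b c -> prec k a c.
Proof. by move=> h /(ple_prec k) [<-|h'] //; apply: prec_trans h h'. Qed.
Lemma prec_le_l {k a b c} : ple a b -> prec k b c -> prec k a c.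
Proof. by move=> /(ple_prec k) [->|h'] h //; apply: prec_trans h' h. Qed.

Definition u (x y : prodT L) (i : 'I_n) : prodT L :=
  fun m => if m == i then y m else x m.
Definition c (x y : prodT L) (i : 'I_n) : prodT L :=
  fun m => if m == i then x m else y m.
Definition T x y i k := prec k (c x y i) (u x y i).

Lemma F1 {x y} (hf : forall m, lt m (x m) (y m)) i : exists k, T x y i k.
Proof.
apply: NNPP => hn.
have H : forall k, prec k (u x y i) (c x y i).
  move=> k.
  have nk : ~ T x y i k by move=> t; apply: hn; exists k.
  case: (hprec k) => _ [_ tot].
  have ne : u x y i <> c x y i.
    move=> e; have := congr1 (fun g : prodT L => g i) e.
    rewrite /= /u /c eqxx => e'.
    by have := hf i; rewrite e'; apply: lt_irr.
  by case: (tot _ _ ne).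
move/hreal: H => [hle _].
have := hle i; rewrite /u /c eqxx; case=> [h|h].
  by have := lt_trans h (hf i); apply: lt_irr.
by have := hf i; rewrite h; apply: lt_irr.
Qed.

Lemma F2 {x y x' y' i j k} : ple (u x y i) (c x' y' j) -> ple (u x' y' j) (c x y i) ->
  T x y i k -> T x' y' j k -> False.
Proof.
move=> h1 h2 t1 t2.
have t3 := prec_le_r t1 h1.
have t4 := prec_trans t3 t2.
by have := prec_le_r t4 h2; apply: prec_irr.
Qed.

Lemma ple_uc {x y} (hf : forall m, lt m (x m) (y m)) {i j} : i != j -> ple (u x y i) (c x y j).
Proof.
move=> ne m; rewrite /u /c.
case: (eqVneq m i) => [->|mi]; first by rewrite (negbTE ne); right.
case: (eqVneq m j) => [->|mj]; first by right.
by left; apply: hf.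
Qed.

Lemma famf {x y} (hf : forall m, lt m (x m) (y m)) :
  exists f : 'I_n -> 'I_n, (forall i, T x y i (f i)) /\ injective f.
Proof.
exists (fun i => proj1_sig (constructive_indefinite_description _ (F1 hf i))).
split; first by move=> i; exact: proj2_sig.
move=> i j e; case: (eqVneq i j) => // ne; exfalso.
have ti := proj2_sig (constructive_indefinite_description _ (F1 hf i)).
have tj := proj2_sig (constructive_indefinite_description _ (F1 hf j)).
rewrite /= in e; rewrite -e in tj.
apply: (F2 _ _ ti tj); apply: ple_uc => //; by rewrite eq_sym.
Qed.

Lemma T_unique {x y} (hf : forall m, lt m (x m) (y m)) {i k k'} :
  T x y i k -> T x y i k' -> k = k'.
Proof.
have [f [hT finj]] := famf hf.
suff E : forall k, T x y i k -> k = f i by move=> /E -> /E ->.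
move=> k0 t; set j := ((perm finj)^-1)%g k0.
have fj : f j = k0 by rewrite -(permE finj) permKV.
case: (eqVneq j i) => [ji|ne]; first by rewrite -fj ji.
exfalso; have tj : T x y j k0 by rewrite -fj.
apply: (F2 _ _ tj t); apply: ple_uc => //; by rewrite eq_sym.
Qed.

Lemma transfer {x y} (hf : forall m, lt m (x m) (y m)) {x' y' i} :
  (forall j, j != i -> ple (u x y j) (c x' y' i) /\ ple (u x' y' i) (c x y j)) ->
  forall k, T x' y' i k -> T x y i k.
Proof.
move=> H k t.
have [f [hT finj]] := famf hf.
set j := ((perm finj)^-1)%g k.
have fj : f j = k by rewrite -(permE finj) permKV.
case: (eqVneq j i) => [ji|ne]; first by rewrite -fj -ji.
exfalso; have [h1 h2] := H j ne.
have tj : T x y j k by rewrite -fj.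
exact: (F2 h1 h2 tj t).
Qed.

Lemma narrow_iff {x y} (hf : forall m, lt m (x m) (y m)) {x' y'}
  (hf' : forall m, lt m (x' m) (y' m)) {i} :
  wle (x i) (x' i) -> wle (y' i) (y i) ->
  (forall m, m != i -> wle (y m) (y' m) /\ wle (x' m) (x m)) ->
  forall k, T x y i k <-> T x' y' i k.
Proof.
move=> hx hy hm.
have C : forall j, j != i -> ple (u x y j) (c x' y' i) /\ ple (u x' y' i) (c x y j).
  move=> j ji; have ij : (i == j) = false by apply/negbTE; rewrite eq_sym.
  split=> m; rewrite /u /c.
  - case: (eqVneq m i) => [->|mi]; first by rewrite ?eqxx ?ij.
    case: (eqVneq m j) => [->|mj]; first by rewrite ?eqxx ?(negbTE ji); case: (hm j ji).
    rewrite ?(negbTE mi) ?(negbTE mj).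
    by left; apply: (lt_wle (hf m)); case: (hm m mi).
  - case: (eqVneq m i) => [->|mi]; first by rewrite ?eqxx ?ij.
    case: (eqVneq m j) => [->|mj]; first by rewrite ?eqxx ?(negbTE ji); case: (hm j ji).
    rewrite ?(negbTE mi) ?(negbTE mj).
    by left; apply: (wle_lt _ (hf m)); case: (hm m mi).
move=> k; split; last exact: (transfer hf C).
move=> t; have [k' t'] := F1 hf' i.
by rewrite (T_unique hf t (transfer hf C _ t')).
Qed.

Lemma ex_min {i} (p q : L i) : exists r, wle r p /\ wle r q.
Proof.
case: (classic (p = q)) => [<-|ne]; first by exists p; split; right.
case: (hlin i) => _ [_ tot]; case: (tot _ _ ne) => h.
  by exists p; split; [right|left].
by exists q; split; [left|right].
Qed.
Lemma ex_max {i} (p q : L i) : exists r, wle p r /\ wle q r.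
Proof.
case: (classic (p = q)) => [<-|ne]; first by exists p; split; right.
case: (hlin i) => _ [_ tot]; case: (tot _ _ ne) => h.
  by exists q; split; [left|right].
by exists p; split; [right|left].
Qed.

Lemma dchoice {I : Type} {P : I -> Type} {Q : forall i, P i -> Prop} :
  (forall i, exists p, Q i p) -> exists g : forall i, P i, forall i, Q i (g i).
Proof.
move=> H; exists (fun i => proj1_sig (constructive_indefinite_description _ (H i))).
by move=> i; exact: proj2_sig.
Qed.

Lemma main_aux (htwo : forall i : 'I_n, exists x y : L i, x <> y) :
  exists sigma : 'S_n, forall (i : 'I_n) (a b : prodT L),
    lt i (a i) (b i) -> prec (sigma i) a b.
Proof.
have hb : forall m, exists p : L m * L m, lt m p.1 p.2.
  move=> m; have [x [y ne]] := htwo m.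
  case: (hlin m) => _ [_ tot]; case: (tot _ _ ne) => h.
    by exists (x, y).
  by exists (y, x).
have [g hg] := dchoice hb.
pose x0 : prodT L := fun m => (g m).1.
pose y0 : prodT L := fun m => (g m).2.
have hf0 : forall m, lt m (x0 m) (y0 m) by [].
have [f [hT finj]] := famf hf0.
exists (perm finj) => i a b hab; rewrite permE.
have h1 : forall m, exists p : L m * L m,
    wle p.1 (x0 m) /\ wle (y0 m) p.2 /\ (m = i -> wle p.1 (a m) /\ wle (b m) p.2) /\
    (m <> i -> p.1 = x0 m /\ p.2 = y0 m).
  move=> m; case: (eqVneq m i) => [->|mi].
    have [lo [l1 l2]] := ex_min (x0 i) (a i).
    have [hi [k1 k2]] := ex_max (y0 i) (b i).
    by exists (lo, hi).
  exists (x0 m, y0 m); split; first by right.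
  split; first by right.
  by split=> e //; rewrite e eqxx in mi.
have [g1 hg1] := dchoice h1.
pose x1 : prodT L := fun m => (g1 m).1.
pose y1 : prodT L := fun m => (g1 m).2.
have hf1 : forall m, lt m (x1 m) (y1 m).
  move=> m; have [p1 [p2 _]] := hg1 m.
  exact: (wle_lt p1 (lt_wle (hf0 m) p2)).
have h2 : forall m, exists p : L m * L m, lt m p.1 p.2 /\
    (m = i -> p.1 = a m /\ p.2 = b m) /\
    (m <> i -> wle p.1 (x0 m) /\ wle (y0 m) p.2 /\ wle p.1 (b m) /\ wle (a m) p.2).
  move=> m; case: (eqVneq m i) => [->|mi].
    by exists (a i, b i); split=> //; split=> // e.
  have [lo [l1 l2]] := ex_min (x0 m) (b m).
  have [hi [k1 k2]] := ex_max (y0 m) (a m).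
  exists (lo, hi); split; first exact: (wle_lt l1 (lt_wle (hf0 m) k1)).
  split; first by move=> e; rewrite e eqxx in mi.
  by move=> _; do 3!split=> //.
have [g2 hg2] := dchoice h2.
pose x2 : prodT L := fun m => (g2 m).1.
pose y2 : prodT L := fun m => (g2 m).2.
have hf2 : forall m, lt m (x2 m) (y2 m) by move=> m; case: (hg2 m).
have t0 : T x0 y0 i (f i) := hT i.
have t1 : T x1 y1 i (f i).
  apply/(narrow_iff hf1 hf0).
  - by case: (hg1 i) => [p1 _].
  - by case: (hg1 i) => [_ [p2 _]].
  - move=> m mi; case: (hg1 m) => [_ [_ [_ /(_ (elimT negP mi \o introT eqP))]]].
    by rewrite /x1 /y1 => -[-> ->]; split; right.
  - exact: t0.
have t2 : T x2 y2 i (f i).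
  apply/(narrow_iff hf1 hf2) => //.
  - rewrite /x1 /x2; case: (hg2 i) => [_ [e _]]; case: (e erefl) => -> _.
    by case: (hg1 i) => [_ [_ [e' _]]]; case: (e' erefl).
  - rewrite /y1 /y2; case: (hg2 i) => [_ [e _]]; case: (e erefl) => _ ->.
    by case: (hg1 i) => [_ [_ [e' _]]]; case: (e' erefl).
  - move=> m mi.
    have mi' : m <> i by move=> e; rewrite e eqxx in mi.
    case: (hg1 m) => [_ [_ [_ /(_ mi') [e1 e2]]]].
    case: (hg2 m) => [_ [_ /(_ mi') [q1 [q2 _]]]].
    by rewrite /x1 /y1 e1 e2.
apply: (prec_le_l _ (prec_le_r t2 _)).
- move=> m; rewrite /c /x2 /y2; case: (eqVneq m i) => [->|mi].
    by case: (hg2 i) => [_ [e _]]; case: (e erefl) => -> _; right.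
  have mi' : m <> i by move=> e; rewrite e eqxx in mi.
  by case: (hg2 m) => [_ [_ /(_ mi') [_ [_ [_ q]]]]].
- move=> m; rewrite /u /x2 /y2; case: (eqVneq m i) => [->|mi].
    by case: (hg2 i) => [_ [e _]]; case: (e erefl) => _ ->; right.
  have mi' : m <> i by move=> e; rewrite e eqxx in mi.
  by case: (hg2 m) => [_ [_ /(_ mi') [_ [_ [q _]]]]].
Qed.

End Aux.

Theorem lemma6p3 (n : nat) (L : 'I_n -> Type)
  (lt : forall i : 'I_n, L i -> L i -> Prop)
  (hlin : forall i : 'I_n, strict_linear_order (lt i))
  (htwo : forall i : 'I_n, exists x y : L i, x <> y)
  (prec : 'I_n -> prodT L -> prodT L -> Prop)
  (hprec : forall k : 'I_n, strict_linear_order (prec k))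
  (hreal : forall a b : prodT L, prod_lt lt a b <-> (forall k : 'I_n, prec k a b)) :
  exists sigma : 'S_n, forall (i : 'I_n) (a b : prodT L),
    lt i (a i) (b i) -> prec (sigma i) a b.
Proof. exact: (@main_aux n L lt hlin prec hprec hreal htwo). Qed.
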